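(* Let $G$ be a feasible graph of diameter $D$ and election index $\phi$, and let $x\ge \phi$ be an integer given as input to all nodes. Consider the following algorithm Generic$(x)$ executed by every node $u$: in rounds $0,\dots,x-1$ each node sends its current augmented truncated view to all neighbours (so that $u$ learns $\mathcal{B}^x(u)$); then for $r=x,x+1,\dots$, in round $r$ the node sends $\mathcal{B}^r(u)$ to all neighbours and receives theirs, so that it knows $\mathcal{B}=\mathcal{B}^{r+1}(u)$, and computes $X$ = the set of views $\mathcal{B}^x(v)$ for all nodes $v$ at depth at most $r-x$ in $\mathcal{B}$ (these are determined by $\mathcal{B}$) and $Y$ = the set of views $\mathcal{B}^x(v)$ for all nodes $v$ at depth exactly $r-x+1$ in $\mathcal{B}$; it stops iterating at the first $r$ with $Y\subseteq X$. It then lets $\mathcal{B}_{min}$ be the lexicographically smallest view in $X$, lets $W$ be the set of nodes $v$ of smallest depth in $\mathcal{B}$ with $\mathcal{B}^x(v)=\mathcal{B}_{min}$, picks $w\in W$ whose sequence of port numbers from the root is lexicographically smallest, and outputs the sequence of port numbers of the shortest path from the root $u$ to $w$ in $\mathcal{B}$. Then Generic$(x)$ is a correct leader election algorithm in $G$ and works in time at most $D+x+1$.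
   Context: A graph is a simple undirected connected finite graph whose nodes have no identifiers; at each node $v$ of degree $d$ the incident edges carry distinct port numbers $0,\dots,d-1$ (local to each node). The truncated view $\mathcal{V}^0(v)$ is a single node; $\mathcal{V}^{l+1}(v)$ is the port-labelled rooted tree whose root has, for every neighbour $v_i$ of $v$, a child $x_i$ joined by an edge carrying the same two port numbers as $\{v,v_i\}$ (the one at $v$ at the root side), and $x_i$ is the root of a copy of $\mathcal{V}^l(v_i)$. The augmented truncated view $\mathcal{B}^l(v)$ is $\mathcal{V}^l(v)$ with each leaf labelled by the degree in $G$ of the node it represents; augmented truncated views are canonically coded as binary strings and ordered lexicographically by these codes. A graph is feasible if for some $l$ the views $\mathcal{B}^l(v)$ of all nodes are pairwise distinct; its election index is the smallest such $l$. Model (LOCAL): synchronous rounds numbered from 0, all nodes start simultaneously, in each round every node exchanges arbitrary messages with all neighbours and computes arbitrarily. Leader election: every node $v$ outputs a sequence $(p_1,q_1,\dots,p_k,q_k)$ of nonnegative integers describing a simple path starting at $v$ whose $i$-th edge has port $p_i$ at its endpoint closer to $v$ and $q_i$ at the other endpoint; all these paths must end at a common node. Time is the number of rounds until all nodes output. $D$ is the diameter of $G$. *)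

(* Defs.v *)
From mathcomp Require Import all_boot.
Set Implicit Arguments. Unset Strict Implicit. Unset Printing Implicit Defensive.

Section Graph.
Variables (V : finType) (adj : rel V) (port : V -> V -> nat).

Definition deg (v : V) : nat := #|[set w | adj v w]|.

Definition port_graph : Prop :=
  [/\ symmetric adj, irreflexive adj, (forall u v, connect adj u v),
      (forall v w, adj v w -> port v w < deg v)
    & (forall v w w', adj v w -> adj v w' -> port v w = port v w' -> w = w')].

Definition nbr (v : V) (i : nat) : option V := [pick w | adj v w & port v w == i].

Definition walk_len (u v : V) (k : nat) : Prop :=
  exists s : seq V, [/\ size s = k, path adj u s & last u s = v].

Definition diameter_of (D : nat) : Prop :=
  (forall u v, exists2 k, k <= D & walk_len u v k) /\
  (exists u v, forall k, walk_len u v k -> D <= k).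
End Graph.

(* A leaf carries the degree of
   the node it represents; an internal node has its children listed in order of
   the port at the parent (child i is reached through port i), each child
   stored together with the port number at the child's side. *)
Inductive view : Type :=
| VLeaf of nat
| VNode of seq (nat * view).

Section Views.
Variables (V : finType) (adj : rel V) (port : V -> V -> nat).

Fixpoint aview (l : nat) (v : V) : view :=
  match l with
  | 0 => VLeaf (deg adj v)
  | l'.+1 =>
      VNode [seq match nbr adj port v i with
                 | Some w => (port w v, aview l' w)
                 | None => (0, VLeaf 0)
                 end | i <- iota 0 (deg adj v)]
  end.

Definition distinct_views (l : nat) : Prop :=
  forall u v, aview l u = aview l v -> u = v.

Definition feasible : Prop := exists l, distinct_views l.

Definition election_index (phi : nat) : Prop :=
  distinct_views phi /\ forall l, distinct_views l -> phi <= l.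
End Views.

(* nodes at depth k of a view tree: (sequence of (port at parent, port at
   child) pairs from the root, subtree rooted at that node) *)
Fixpoint nodes_at (k : nat) (t : view) : seq (seq (nat * nat) * view) :=
  match k with
  | 0 => [:: ([::], t)]
  | k'.+1 =>
      match t with
      | VLeaf _ => [::]
      | VNode cs =>
          flatten [seq [seq ((ic.1, ic.2.1) :: n.1, n.2) | n <- nodes_at k' ic.2.2]
                  | ic <- zip (iota 0 (size cs)) cs]
      end
  end.

(* the view of depth k of the node at the root of t (leaves get labelled
   with the number of children, i.e. the degree) *)
Fixpoint trunc (k : nat) (t : view) : view :=
  match k, t with
  | 0, VLeaf d => VLeaf d
  | 0, VNode cs => VLeaf (size cs)
  | _.+1, VLeaf d => VLeaf d
  | k'.+1, VNode cs => VNode [seq (c.1, trunc k' c.2) | c <- cs]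
  end.

Fixpoint lexle (s t : seq nat) : bool :=
  match s, t with
  | [::], _ => true
  | _ :: _, [::] => false
  | a :: s', b :: t' => (a < b) || ((a == b) && lexle s' t')
  end.

Definition pick_min (T : Type) (le : T -> T -> bool) (d : T) (s : seq T) : T :=
  foldr (fun a b => if le a b then a else b) (head d s) s.

Definition ports_seq (p : seq (nat * nat)) : seq nat :=
  flatten [seq [:: pq.1; pq.2] | pq <- p].

Section Generic.
Variable code : view -> seq bool.  (* canonical binary coding of views *)
Variable x : nat.

Definition code_le (a b : view) : bool :=
  lexle (map nat_of_bool (code a)) (map nat_of_bool (code b)).

Definition Xset (r : nat) (B : view) : seq view :=
  flatten [seq [seq trunc x n.2 | n <- nodes_at d B] | d <- iota 0 (r - x).+1].

Definition Yset (r : nat) (B : view) : seq view :=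
  [seq trunc x n.2 | n <- nodes_at (r - x).+1 B].

Definition stop_cond (r : nat) (B : view) : bool :=
  all (fun y => has (fun z => code z == code y) (Xset r B)) (Yset r B).

Definition Bmin (r : nat) (B : view) : view :=
  pick_min code_le (VLeaf 0) (Xset r B).

Definition Wd (r : nat) (B : view) (d : nat) : seq (seq (nat * nat)) :=
  [seq n.1 | n <- nodes_at d B & code (trunc x n.2) == code (Bmin r B)].

Definition dmin (r : nat) (B : view) : nat :=
  find (fun d => Wd r B d != [::]) (iota 0 (r - x).+1).

Definition output (r : nat) (B : view) : seq nat :=
  ports_seq (pick_min (fun p q => lexle (ports_seq p) (ports_seq q)) [::]
                      (Wd r B (dmin r B))).

Section OnGraph.
Variables (V : finType) (adj : rel V) (port : V -> V -> nat).

(* r is the round at which node u stops iterating: after round r it knows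
   B^{r+1}(u), and r is the first r >= x satisfying Y \subseteq X *)
Definition stop_round (u : V) (r : nat) : Prop :=
  [/\ x <= r, stop_cond r (aview adj port r.+1 u)
    & forall r', x <= r' < r -> ~~ stop_cond r' (aview adj port r'.+1 u)].

Definition generic_output (u : V) (r : nat) : seq nat :=
  output r (aview adj port r.+1 u).
End OnGraph.
End Generic.

Section Paths.
Variables (V : finType) (adj : rel V) (port : V -> V -> nat).

(* the nodes visited when following (p1,q1,...,pk,qk) from v, checking that
   the i-th edge has port p_i at the near end and q_i at the far end *)
Fixpoint trace (v : V) (o : seq nat) : option (seq V) :=
  match o with
  | [::] => Some [::]
  | p :: q :: o' =>
      match nbr adj port v p with
      | Some w => if port w v == q then omap (cons w) (trace w o') else None
      | None => None
      end
  | _ => None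
  end.

Definition describes_path (v : V) (o : seq nat) (l : V) : Prop :=
  exists s, [/\ trace v o = Some s, uniq (v :: s) & last v s = l].
End Paths.

(* Main.v *)
Require Import Defs.
From HB Require Import structures.
From mathcomp Require Import all_boot zify.
Set Implicit Arguments. Unset Strict Implicit. Unset Printing Implicit Defensive.

Fixpoint view_rect' (P : view -> Type) (HL : forall n, P (VLeaf n))
  (HN : forall cs, foldr (fun c acc => P c.2 * acc)%type unit cs -> P (VNode cs))
  (v : view) : P v :=
  match v with
  | VLeaf n => HL n
  | VNode cs => HN cs ((fix go (cs : seq (nat * view)) :
        foldr (fun c acc => P c.2 * acc)%type unit cs :=
        match cs with [::] => tt | c :: cs' => (view_rect' HL HN c.2, go cs') end) cs)
  end.

Lemma view_eq_dec : forall a b : view, {a = b} + {a <> b}.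
Proof.
elim/view_rect'.
- move=> n [m|ds]; last by right.
  case: (eqVneq n m) => [->|H]; [by left | by right; case=> /eqP; rewrite (negPf H)].
- move=> cs IH [m|ds]; first by right.
  have: {cs = ds} + {cs <> ds}.
    elim: cs IH ds => [|[k v] cs IHc] /=.
      by move=> _ [|d ds]; [left|right].
    move=> [IHv IH] [|[k' v'] ds]; first by right.
    case: (eqVneq k k') => [<-|Hk]; last by right; case=> /eqP; rewrite (negPf Hk).
    case: (IHv v') => [<-|Hv]; last by right; case.
    case: (IHc IH ds) => [<-|Hd]; last by right; case.
    by left.
  by case=> [<-|H]; [left|right; case].
Qed.

HB.instance Definition _ := hasDecEq.Build view (compareP view_eq_dec).

Section G.
Variables (V : finType) (adj : rel V) (port : V -> V -> nat).
Hypothesis Hg : port_graph adj port.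

Lemma nbr_port v w : adj v w -> nbr adj port v (port v w) = Some w.
Proof.
move=> Hvw; rewrite /nbr; case: pickP => [w' /andP[Ha /eqP Hp]|/(_ w)]; last by rewrite Hvw eqxx.
by case: Hg => _ _ _ _ Hinj; rewrite (Hinj _ _ _ Ha Hvw Hp).
Qed.

Lemma nbr_some v i : i < deg adj v ->
  exists w, [/\ nbr adj port v i = Some w, adj v w & port v w = i].
Proof.
move=> Hi.
set s := [seq port v w | w <- enum [set w | adj v w]].
have Hu : uniq s.
  rewrite map_inj_in_uniq ?enum_uniq // => w w'.
  rewrite !mem_enum !inE => Hw Hw' Hp.
  by case: Hg => _ _ _ _ Hinj; apply: Hinj Hp.
have Hsub : {subset s <= iota 0 (deg adj v)}.
  move=> j /mapP [w]; rewrite mem_enum inE => Hw ->.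
  by rewrite mem_iota add0n; case: Hg => _ _ _ Hlt _; apply: Hlt.
have Hsz : size (iota 0 (deg adj v)) <= size s.
  by rewrite size_iota size_map -cardE.
have [_ Heq] := uniq_min_size Hu Hsub Hsz.
have : i \in s by rewrite Heq mem_iota.
case/mapP => w; rewrite mem_enum inE => Hw ->.
by exists w; split => //; apply: nbr_port.
Qed.

Notation av := (aview adj port).

Lemma trunc_aview k j v : k <= j -> trunc k (av j v) = av k v.
Proof.
elim: k j v => [|k IH] [|j] v Hkj //=.
- by rewrite size_map size_iota.
- congr VNode; rewrite -map_comp; apply: eq_map => i /=.
  case: (nbr adj port v i) => [w|] /=; first by rewrite IH.
  by case: (k).
Qed.

Lemma zip_self_map (T : Type) (s : seq nat) (f : nat -> T) :
  zip s (map f s) = map (fun i => (i, f i)) s.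
Proof. by elim: s => //= a s ->. Qed.

Lemma ports_seq_cons a l : ports_seq (a :: l) = a.1 :: a.2 :: ports_seq l.
Proof. by []. Qed.

Lemma nodesA d m u n : d <= m -> n \in nodes_at d (av m u) ->
  exists s, [/\ size s = d, path adj u s, n.2 = av (m - d) (last u s)
              & trace adj port u (ports_seq n.1) = Some s].
Proof.
elim: d m u n => [|d IH] m u n Hdm.
  by rewrite /= inE => /eqP ->; exists [::]; rewrite subn0.
case: m Hdm => [//|m] Hdm /=.
rewrite size_map size_iota zip_self_map -map_comp.
case/flattenP => ns /mapP [i Hi ->] /mapP [n' Hn' ->].
rewrite mem_iota add0n in Hi.
have [w [Hnb Ha Hp]] := nbr_some Hi.
rewrite /= Hnb /= in Hn' *.
have [s [Hs Hps Hv Ht]] := IH _ _ _ Hdm Hn'.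
exists (w :: s); split => //=; first by rewrite Hs.
  by rewrite Ha.
by rewrite eqxx -/(ports_seq _) Ht.
Qed.

Lemma nodesB u s m : path adj u s -> size s <= m ->
  exists2 n, n \in nodes_at (size s) (av m u) & n.2 = av (m - size s) (last u s).
Proof.
elim: s u m => [|w s IH] u m.
  by move=> _ _; exists ([::], av m u); rewrite /= ?inE ?subn0.
case: m => [//|m] /= /andP[Ha Hp] Hsz.
have [n Hn Hv] := IH _ _ Hp Hsz.
exists ((port u w, port w u) :: n.1, n.2); last by rewrite Hv.
rewrite size_map size_iota zip_self_map -map_comp.
match goal with |- context [map ?f (iota 0 _)] =>
  apply/flattenP; exists (f (port u w)) end.
  apply: map_f; rewrite mem_iota add0n leq0n /=.
  by case: Hg => _ _ _ Hlt _; apply: Hlt.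
rewrite /= (nbr_port Ha) /=; apply/mapP; exists n => //.
Qed.

Variables (code : view -> seq bool) (x : nat).

Lemma Xset_mem r u z : x <= r ->
  z \in Xset x r (av r.+1 u) <->
  exists v, exists2 j, j <= r - x & walk_len adj u v j /\ z = av x v.
Proof.
move=> Hxr; rewrite /Xset; split.
  case/flattenP => zs /mapP [d Hd ->] /mapP [n Hn ->].
  rewrite mem_iota add0n ltnS in Hd.
  have [|s [Hs Hp Hv _]] := nodesA (d:=d) (m:=r.+1) _ Hn; first by lia.
  exists (last u s); exists d => //; split; first by exists s.
  by rewrite Hv trunc_aview //; lia.
case=> v [j Hj [[s [Hs Hp Hl]] ->]].
have [|n Hn Hv] := nodesB (m:=r.+1) Hp; first by lia.
apply/flattenP; exists [seq trunc x n.2 | n <- nodes_at j (av r.+1 u)].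
  by apply/mapP; exists j => //; rewrite mem_iota add0n ltnS.
apply/mapP; exists n; first by rewrite -Hs.
by rewrite Hv trunc_aview ?Hl //; lia.
Qed.

Lemma Yset_mem r u z : x <= r ->
  z \in Yset x r (av r.+1 u) <->
  exists v, walk_len adj u v (r - x).+1 /\ z = av x v.
Proof.
move=> Hxr; rewrite /Yset; split.
  case/mapP => n Hn ->.
  have [|s [Hs Hp Hv _]] := nodesA (d:=(r - x).+1) (m:=r.+1) _ Hn; first by lia.
  exists (last u s); split; first by exists s.
  by rewrite Hv trunc_aview //; lia.
case=> v [[s [Hs Hp Hl]] ->].
have [|n Hn Hv] := nodesB (m:=r.+1) Hp; first by lia.
apply/mapP; exists n; first by rewrite -Hs.
by rewrite Hv trunc_aview ?Hl //; lia.
Qed.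

Hypothesis Hcode : injective code.
Hypothesis Hdv : distinct_views adj port x.
Hypothesis HD1 : forall u v, exists j, walk_len adj u v j.

Definition Ball u k := forall v, exists2 j, j <= k & walk_len adj u v j.

Lemma stop_ball r u : x <= r -> stop_cond code x r (av r.+1 u) -> Ball u (r - x).
Proof.
move=> Hxr Hst v; have [j Hw] := HD1 u v.
elim: j v Hw => [|j IH] v Hw; first by exists 0.
case: Hw => s [Hs Hp Hl].
case/lastP: s Hs Hp Hl => [//|s0 y] Hs Hp Hl.
rewrite size_rcons in Hs; case: Hs => Hs.
rewrite rcons_path in Hp; case/andP: Hp => Hp Ha.
rewrite last_rcons in Hl; subst y.
have [|j' Hj' [t [Ht Hpt Hlt]]] := IH (last u s0); first by exists s0.
have Hw' : walk_len adj u v j'.+1.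
  by exists (rcons t v); rewrite size_rcons Ht rcons_path Hpt Hlt Ha last_rcons.
case: (ltnP j' (r - x)) => Hlt'; first by exists j'.+1.
have Hj'e : j' = r - x by apply/eqP; rewrite eqn_leq Hj' Hlt'.
rewrite Hj'e in Hw'.
have HY : av x v \in Yset x r (av r.+1 u) by apply/Yset_mem => //; exists v.
have /hasP [z Hz /eqP Hcz] := allP Hst _ HY.
have := Hcode Hcz => Hze; rewrite Hze in Hz.
have [v' [j2 Hj2 [Hw2 Hv']]] := (Xset_mem _ _ Hxr).1 Hz.
by rewrite (Hdv Hv'); exists j2.
Qed.

Lemma ball_stop r u : x <= r -> Ball u (r - x) -> stop_cond code x r (av r.+1 u).
Proof.
move=> Hxr HB; apply/allP => y /(Yset_mem _ _ Hxr) [v [_ ->]].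
apply/hasP; exists (av x v) => //.
apply/Xset_mem => //; have [j Hj Hw] := HB v; exists v; exists j => //.
Qed.

Lemma foldr_min (T : eqType) (le : rel T) (Hrefl : reflexive le)
  (Htr : transitive le) (Htot : total le) z s :
  let f := foldr (fun a b => if le a b then a else b) z s in
  [/\ f = z \/ f \in s, le f z & forall y, y \in s -> le f y].
Proof.
elim: s => [|a s [IH1 IH2 IH3]] /=; first by split => //; left.
case: ifP => H.
  split; [by right; rewrite mem_head | by apply: Htr IH2|].
  move=> y; rewrite inE => /orP [/eqP ->|Hy]; first by [].
  by apply: Htr (IH3 _ Hy).
have Hfa : le (foldr (fun a b => if le a b then a else b) z s) a.
  by case/orP: (Htot a (foldr (fun a b => if le a b then a else b) z s)) => //; rewrite H.
split => //.
  by case: IH1 => [->|Hm]; [left|right; rewrite inE Hm orbT].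
by move=> y; rewrite inE => /orP [/eqP ->|Hy] //; apply: IH3.
Qed.

Lemma pick_min_spec (T : eqType) (le : rel T) (Hrefl : reflexive le)
  (Htr : transitive le) (Htot : total le) d s : s != [::] ->
  pick_min le d s \in s /\ forall y, y \in s -> le (pick_min le d s) y.
Proof.
case: s => [//|a s] _.
have -> : pick_min le d (a :: s) = foldr (fun a b => if le a b then a else b) a (a :: s) by [].
have [H1 H2 H3] := foldr_min Hrefl Htr Htot a (a :: s).
split => //; case: H1 => [->|//]; exact: mem_head.
Qed.

Lemma lexle_refl : reflexive lexle.
Proof. by elim => //= a s ->; rewrite eqxx ltnn. Qed.

Lemma lexle_trans : transitive lexle.
Proof.
move=> t s; elim: s t => [|a s IH] [|b t] [|c w] //=.
case: (ltngtP a b) => Hab //= Ht; case: (ltngtP b c) => Hbc //= Hw.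
- by rewrite (ltn_trans Hab Hbc).
- by rewrite -Hbc Hab.
- by rewrite Hab Hbc.
- by rewrite Hab -Hbc eqxx (IH _ _ Ht Hw) orbT.
Qed.

Lemma lexle_total : total lexle.
Proof.
elim => [|a s IH] [|b t] //=.
case: (ltngtP a b) => Hab //=.
Qed.

Lemma lexle_anti s t : lexle s t -> lexle t s -> s = t.
Proof.
elim: s t => [|a s IH] [|b t] //=.
case: (ltngtP a b) => Hab //= H1 H2.
by rewrite Hab (IH _ H1 H2).
Qed.

Lemma cut_loop u s : path adj u s -> u \in s ->
  exists s', [/\ path adj u s', last u s' = last u s & size s' < size s].
Proof.
move=> Hp Hin; case/splitPr: Hin Hp => p1 p2 Hp.
exists p2; rewrite cat_path in Hp; case/andP: Hp => _ /= /andP [_ Hp2].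
by rewrite last_cat /= size_cat /= Hp2; split => //; lia.
Qed.

Lemma shorter u s : path adj u s -> ~~ uniq (u :: s) ->
  exists s', [/\ path adj u s', last u s' = last u s & size s' < size s].
Proof.
elim: s u => [|y t IH] u Hp; first by [].
rewrite cons_uniq negb_and negbK => /orP [Hin|Hnu]; first exact: cut_loop.
case/andP: Hp => Ha Hp.
have [t' [Hp' Hl' Hs']] := IH _ Hp Hnu.
by exists (y :: t'); rewrite /= Ha Hp' Hl'; split.
Qed.

Lemma Wd_mem r B d p : p \in Wd code x r B d <->
  exists2 n, n \in nodes_at d B & p = n.1 /\ code (trunc x n.2) = code (Bmin code x r B).
Proof.
rewrite /Wd; split.
  by case/mapP => n; rewrite mem_filter => /andP [/eqP Hc Hn] ->; exists n.
case=> n Hn [-> Hc]; apply/mapP; exists n => //; by rewrite mem_filter Hc eqxx.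
Qed.

Lemma stops u (D : nat) (HDb : forall v, exists2 k, k <= D & walk_len adj u v k) :
  exists2 r, stop_round code x adj port u r & r.+1 <= D + x + 1.
Proof.
pose P k := stop_cond code x (x + k) (av (x + k).+1 u).
have HP : exists k, P k.
  exists D; apply: ball_stop; first exact: leq_addr.
  by rewrite addKn.
case: (ex_minnP HP) => k Hk Hmin.
have HkD : k <= D.
  apply: Hmin; apply: ball_stop; first exact: leq_addr.
  by rewrite addKn.
exists (x + k); last by lia.
split => //; first exact: leq_addr.
move=> r' /andP [H1 H2]; apply/negP => Hs.
have : P (r' - x) by rewrite /P subnKC.
by move/Hmin; lia.
Qed.

Lemma code_le_refl : reflexive (code_le code).
Proof. by move=> a; apply: lexle_refl. Qed.
Lemma code_le_trans : transitive (code_le code).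
Proof. by move=> a b c; apply: lexle_trans. Qed.
Lemma code_le_total : total (code_le code).
Proof. by move=> a b; apply: lexle_total. Qed.

Definition ple (p q : seq (nat * nat)) := lexle (ports_seq p) (ports_seq q).
Lemma ple_refl : reflexive ple.
Proof. by move=> a; apply: lexle_refl. Qed.
Lemma ple_trans : transitive ple.
Proof. by move=> a b c; apply: lexle_trans. Qed.
Lemma ple_total : total ple.
Proof. by move=> a b; apply: lexle_total. Qed.

Lemma code_le_anti a b : code_le code a b -> code_le code b a -> a = b.
Proof.
move=> H1 H2; apply: Hcode; apply: (inj_map (f := nat_of_bool)).
  by case; case.
exact: lexle_anti.
Qed.

Lemma correct (l : V) (Hl : forall v, code_le code (av x l) (av x v)) u r :
  stop_round code x adj port u r ->
  describes_path adj port u (generic_output code x adj port u r) l.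
Proof.
case=> Hxr Hst _.
rewrite /generic_output /output.
set B := av r.+1 u.
have HB := stop_ball Hxr Hst.
have Hu : av x u \in Xset x r B.
  apply/Xset_mem => //; exists u; exists 0 => //; split => //; by exists [::].
have Hne : Xset x r B != [::] by case: (Xset x r B) Hu.
have [HBm1 HBm2] := pick_min_spec code_le_refl code_le_trans code_le_total (VLeaf 0) Hne.
have Hlin : av x l \in Xset x r B.
  apply/Xset_mem => //; exists l; have [j Hj Hw] := HB l; exists j => //.
have Hbm : Bmin code x r B = av x l.
  rewrite /Bmin; apply: code_le_anti; first exact: HBm2.
  have [w [j _ [_ ->]]] := (Xset_mem _ _ Hxr).1 HBm1.
  exact: Hl.
set k := r - x.
set pr := fun d => Wd code x r B d != [::].
have Hpr : forall s, path adj u s -> last u s = l -> size s <= k -> pr (size s).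
  move=> s Hp Hls Hs.
  have [|n Hn Hv] := nodesB (m:=r.+1) Hp; first by lia.
  have Hn1 : n.1 \in Wd code x r B (size s).
    apply/Wd_mem; exists n => //; split => //.
    by rewrite Hbm Hv Hls trunc_aview //; lia.
  by rewrite /pr; case: (Wd code x r B (size s)) Hn1.
have Hhas : has pr (iota 0 k.+1).
  have [j Hj [s [Hs Hp Hls]]] := HB l.
  apply/hasP; exists j; first by rewrite mem_iota add0n ltnS.
  by rewrite -Hs; apply: Hpr => //; rewrite Hs.
have Hdm : dmin code x r B = find pr (iota 0 k.+1) by [].
have Hdmlt : dmin code x r B < k.+1.
  by rewrite Hdm; move: Hhas; rewrite has_find size_iota.
have Hprd : pr (dmin code x r B).
  have := nth_find 0 Hhas; rewrite -Hdm nth_iota //.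
have [Hp1 _] := pick_min_spec ple_refl ple_trans ple_total [::] Hprd.
set p := pick_min _ _ _ in Hp1 *.
have [n Hn [Hpn Hc]] := (Wd_mem _ _ _ _).1 Hp1.
have [|s [Hs Hps Hv Ht]] := nodesA (m:=r.+1) _ Hn; first by lia.
have Hls : last u s = l.
  apply: Hdv; apply: Hcode; rewrite -Hbm -Hc Hv trunc_aview //; lia.
exists s; split => //.
  move: Ht; rewrite -Hpn /p => H; exact H.
apply/negPn/negP => Hnu.
have [s' [Hp' Hl' Hs']] := shorter Hps Hnu.
have Hlt : size s' < find pr (iota 0 k.+1) by rewrite -Hdm -Hs.
have := before_find 0 Hlt; rewrite nth_iota ?add0n; last by lia.
by rewrite Hpr // ?Hl' //; lia.
Qed.
End G.

Theorem lemma1 (V : finType) (adj : rel V) (port : V -> V -> nat)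
    (code : view -> seq bool) (D phi x : nat) :
  port_graph adj port ->
  injective code ->
  diameter_of adj D ->
  election_index adj port phi ->
  phi <= x ->
  (* every node stops, and all do so within D + x + 1 rounds *)
  (forall u : V, exists2 r, stop_round code x adj port u r & r.+1 <= D + x + 1) /\
  (* the outputs are simple paths all ending at a common node *)
  (exists l : V, forall (u : V) (r : nat), stop_round code x adj port u r ->
     describes_path adj port u (generic_output code x adj port u r) l).
Proof.
move=> Hg Hc [HD1 [u0 _]] [Hphi _] Hx.
have Hdv : distinct_views adj port x.
  move=> a b H; apply: Hphi.
  by rewrite -(trunc_aview adj port a Hx) -(trunc_aview adj port b Hx) H.
have HD1' : forall u v, exists j, walk_len adj u v j.
  by move=> u v; have [j _ Hw] := HD1 u v; exists j.
split.
  by move=> u; apply: (stops Hg code x (D:=D)) => v; exact: HD1 u v.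
set L := [seq aview adj port x v | v <- enum V].
have HL : L != [::].
  have : aview adj port x u0 \in L by apply: map_f; rewrite mem_enum.
  by case: L.
have [H1 H2] := pick_min_spec (@code_le_refl code) (@code_le_trans code)
                  (@code_le_total code) (VLeaf 0) HL.
case/mapP: H1 => l _ Hpl.
exists l => u r Hsr.
apply: (correct Hg Hc Hdv HD1' _ Hsr) => v.
by rewrite -Hpl; apply: H2; apply: map_f; rewrite mem_enum.
Qed.
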